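(* Let $p$ be a prime and let $A$ be the $p\times p$ matrix over $\mathbb{F}_p$ with rows and columns indexed by $0,1,\dots,p-1$ defined by $A(s,s)=0$ for all $s$, $A(s,0)=1$ for $s=1,\dots,p-1$, and $A(s,t)=(s-t)^{-1}$ for $s\in\{0,\dots,p-1\}$, $t\in\{1,\dots,p-1\}$, $s\neq t$. Then every $2\times 2$ submatrix of $A$ is invertible. *)

(* Defs.v *)
From mathcomp Require Import all_boot all_order all_algebra.
Set Implicit Arguments. Unset Strict Implicit. Unset Printing Implicit Defensive.
Import GRing.Theory.
Local Open Scope ring_scope.

Definition Amat (p : nat) : 'M['F_p]_p :=
  \matrix_(s < p, t < p)
    if s == t then 0
    else if (t : nat) == 0%N then 1
    else ((s : nat)%:R - (t : nat)%:R)^-1.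

(* Main.v *)
Require Import Defs.
From mathcomp Require Import all_boot all_order all_algebra.
From mathcomp Require Import zify ring.
Import GRing.Theory.
Local Open Scope ring_scope.
Definition e (p : nat) (s t : nat) : 'F_p := if s == t then 0 else if t == 0%N then 1 else (s%:R - t%:R)^-1.

Lemma nz (p : nat) (hp : prime p) (x y : nat) : (x < p)%N -> (y < p)%N -> x != y -> (x%:R - y%:R : 'F_p) != 0.
Proof.
move=> hx hy hxy; rewrite subr_eq0; apply/negP => /eqP E.
wlog lt: x y hx hy hxy E / (x < y)%N.
  move=> H; case: (ltngtP x y) => [l|l|l]; first exact: (H x y).
  - by apply: (H y x) => //; rewrite eq_sym.
  - by rewrite l eqxx in hxy.
have : (p %| y - x)%N by rewrite (dvdn_pcharf (pchar_Fp hp)) natrB ?E ?subrr // ltnW.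
move/dvdn_leq; lia.
Qed.
Arguments nz {p} hp {x y}.

Lemma key (p : nat) (hp : prime p) a b c d : (a < b)%N -> (b < p)%N -> (c < d)%N -> (d < p)%N ->
  e p a c * e p b d - e p a d * e p b c != 0.
Proof.
move=> hab hb hcd hd.
have ha : (a < p)%N by lia.
have hc : (c < p)%N by lia.
rewrite /e.
case: (c =P 0%N) => [c0|cn0].
  subst c.
  try (have -> : (b == 0%N) = false by lia).
  try (have -> : (d == 0%N) = false by lia).
  case: (a =P 0%N) => [a0|an0].
    subst a. rewrite (_ : (0 == d)%N = false); last by lia.
    rewrite mul0r sub0r mulr1 oppr_eq0 invr_eq0. have hd0 : (0 != d)%N by lia. exact (nz hp hc hd hd0).
  try (have -> : (a == 0%N) = false by lia).
  rewrite mul1r mulr1.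
  case: (b =P d) => [bd|nbd].
    subst d. try (have -> : (a == b) = false by lia).
    rewrite sub0r oppr_eq0 invr_eq0. apply: (nz hp) => //; lia.
  case: (a =P d) => [ad|nad].
    subst d. rewrite subr0 invr_eq0. apply: (nz hp) => //; lia.
  have h1 := nz hp hb hd (introN eqP nbd).
  have h2 := nz hp ha hd (introN eqP nad).
  have h3 : (a%:R - b%:R : 'F_p) != 0 by apply: (nz hp) => //; lia.
  have -> : ((b%:R - d%:R)^-1 - (a%:R - d%:R)^-1 : 'F_p) =
     (a%:R - b%:R) / ((b%:R - d%:R) * (a%:R - d%:R)) by field; rewrite h1 h2.
  by rewrite mulf_neq0 // invr_eq0 mulf_neq0.
try (have -> : (d == 0%N) = false by lia).
case: (a =P c) => [ac|nac].
  subst c. try (have -> : (a == d) = false by lia). try (have -> : (b == a) = false by lia).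
  rewrite mul0r sub0r oppr_eq0 mulf_neq0 // invr_eq0; apply: (nz hp) => //; lia.
case: (b =P d) => [bd|nbd].
  subst d. try (have -> : (a == b) = false by lia). try (have -> : (b == c) = false by lia).
  rewrite mulr0 sub0r oppr_eq0 mulf_neq0 // invr_eq0; apply: (nz hp) => //; lia.
case: (a =P d) => [ad|nad].
  subst d. try (have -> : (b == c) = false by lia).
  rewrite mul0r subr0 mulf_neq0 // invr_eq0; apply: (nz hp) => //; lia.
case: (b =P c) => [bc|nbc].
  subst c. rewrite mulr0 subr0 mulf_neq0 // invr_eq0; apply: (nz hp) => //; lia.
have h1 := nz hp ha hc (introN eqP nac).
have h2 := nz hp hb hd (introN eqP nbd).
have h3 := nz hp ha hd (introN eqP nad).
have h4 := nz hp hb hc (introN eqP nbc).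
have h5 : (a%:R - b%:R : 'F_p) != 0 by apply: (nz hp) => //; lia.
have h6 : (d%:R - c%:R : 'F_p) != 0 by apply: (nz hp) => //; lia.
have -> : ((a%:R - c%:R)^-1 * (b%:R - d%:R)^-1 - (a%:R - d%:R)^-1 * (b%:R - c%:R)^-1 : 'F_p) =
   ((a%:R - b%:R) * (d%:R - c%:R)) / ((a%:R - c%:R) * (b%:R - d%:R) * (a%:R - d%:R) * (b%:R - c%:R)).
  by field; rewrite ?h1 ?h2 ?h3 ?h4.
by rewrite mulf_neq0 ?mulf_neq0 // invr_eq0 !mulf_neq0.
Qed.
Arguments key {p} hp {a b c d}.

Lemma det22 (R : comNzRingType) (M : 'M[R]_2) :
  \det M = M ord0 ord0 * M ord_max ord_max - M ord0 ord_max * M ord_max ord0.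
Proof.
rewrite (expand_det_row _ ord0) !big_ord_recl big_ord0 addr0 /cofactor.
rewrite !det_mx11 /= !mxE /= expr0 expr1 mul1r mulN1r mulrN.
try (have -> : lift ord0 (0 : 'I_1) = ord_max :> 'I_2 by apply/val_inj).
try (have -> : lift ord0 (ord0 : 'I_1) = ord_max :> 'I_2 by apply/val_inj).
try (have -> : lift (lift ord0 (ord0 : 'I_1)) (0 : 'I_1) = ord0 :> 'I_2 by apply/val_inj).
by have -> : lift ord_max (0 : 'I_1) = ord0 :> 'I_2 by apply/val_inj.
Qed.

Theorem lemma2p7 (p : nat) (hp : prime p) (f g : 'I_2 -> 'I_p) :
  (f ord0 < f ord_max)%N -> (g ord0 < g ord_max)%N ->
  mxsub f g (Amat p) \in unitmx.
Proof.
move=> hf hg.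
rewrite unitmxE unitfE det22 !mxE.
have E : forall s t : 'I_p, (s == t) = (s == t :> nat) by [].
rewrite !E.
have K := key hp hf (ltn_ord _) hg (ltn_ord _).
rewrite /e in K.
exact: K.
Qed.
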